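(* Let $h\ge 2$ be an integer and $\lambda_G,\lambda_L,\gamma>0$. Let $S=\{(a,b): a\ge 1,\ b\ge 1,\ a+b\le h\}\cup\{(0,1)^\ast\}$ and let $\mathbf{P}=(p_{s,t})_{s,t\in S}$, $\Phi=(\phi_{s,t})_{s,t\in S}$ be the matrices whose only non-zero entries are as follows: for $(a,b)\in S$ with $a\ge 1$, $p_{(a,b),(a-1,b+1)}=\frac{a\lambda_L}{a\lambda_L+\gamma}$ and $\phi_{(a,b),(a-1,b+1)}=\frac{a\lambda_L}{b(a\lambda_L+\gamma)}$ if $a>1$; $p_{(1,b),(0,1)^\ast}=\frac{\lambda_L}{\lambda_L+\gamma}$ and $\phi_{(1,b),(0,1)^\ast}=\frac{\lambda_L}{b(\lambda_L+\gamma)}$; $p_{(a,b),(a,b-1)}=\frac{(b-1)\gamma}{b(a\lambda_L+\gamma)}$ if $b\ge 2$; $\phi_{(a,b),(h-1,1)}=\frac{\lambda_G}{b(a\lambda_L+\gamma)}$; and $\phi_{(0,1)^\ast,(h-1,1)}=\lambda_G/\gamma$ (the row of $\mathbf{P}$ indexed by $(0,1)^\ast$ is zero). Let $\mathbf{M}=(\mathbf{I}-\mathbf{P})^{-1}\Phi$, let $\mu_G=\lambda_G/\gamma$, let $\mathbf{G}$ be the $S\times S$ matrix with $G_{s,(h-1,1)}=\mu_G$ for all $s\in S$ and all other entries $0$, and let $\mathbf{U}=(u_{s,t})=\mathbf{M}-\mathbf{G}$. For $i=0,1,\ldots,h-1$ let $\mu_i$ be the mean number of infectives in generation $i$ of the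 single-household epidemic described in the context. Then for $i=0,1,\ldots,h-1$, $$\mu_i=\sum_{(c,d)\in S}\big(\mathbf{U}^i\big)_{(h-1,1),(c,d)},$$ i.e. $\mu_i$ equals the sum of the row of $\mathbf{U}^i$ indexed by $(h-1,1)$ (with $\mathbf{U}^0=\mathbf{I}$).
   Context: Single-household Markovian SIR epidemic: a household of $h$ individuals initially contains one infective and $h-1$ susceptibles. Each infective remains infectious for an exponentially distributed time with rate $\gamma$ (independently), during which it makes contacts with each other given household member at the points of independent homogeneous Poisson processes of rate $\lambda_L$; a contacted susceptible immediately becomes infectious; recovered individuals play no further role. Generations: the initial infective is in generation $0$, and an individual infected by an infective of generation $i-1$ is in generation $i$. A state $(a,b)$ denotes a household with $a$ susceptibles and $b$ infectives; the states with no susceptibles are amalgamated into the single state $(0,1)^\ast$. The matrix $\mathbf{M}$ is the mean reproduction matrix, whose entry $m_{s,t}$ is the mean number of type-$t$ infectives generated by an individual who becomes infected as a member of a type-$s$ infectious unit (in the household epidemic model where, in addition, each infective makes global contacts at rate $\lambda_G$, each creating a new household infectious unit in state $(h-1,1)$). *)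

(* Defs.v *)
From HB Require Import structures.
From mathcomp Require Import all_boot all_order all_algebra.
Set Implicit Arguments. Unset Strict Implicit. Unset Printing Implicit Defensive.
Import Order.TTheory GRing.Theory Num.Theory.
Local Open Scope ring_scope.

(* State space S: Some (a,b) with a>=1, b>=1, a+b<=h; None = (0,1)^* *)
Definition St (h : nat) : finType :=
  option {p : ('I_h.+1 * 'I_h.+1)%type |
          [&& (0 < p.1)%N, (0 < p.2)%N & (p.1 + p.2 <= h)%N]}.

Definition stateA h (s : St h) : nat :=
  if s is Some p then nat_of_ord (val p).1 else 0%N.
Definition stateB h (s : St h) : nat :=
  if s is Some p then nat_of_ord (val p).2 else 1%N.
Definition isPair h (t : St h) (a b : nat) : bool :=
  [&& t != None, stateA t == a & stateB t == b].

Section Matrices.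
Variables (R : realFieldType) (h : nat) (lG lL g : R).

Definition pP (s t : St h) : R :=
  if s is None then 0 else
  let a := stateA s in let b := stateB s in
  (if (1 < a)%N && isPair t a.-1 b.+1 then a%:R * lL / (a%:R * lL + g) else 0)
  + (if (a == 1)%N && (t == None) then lL / (lL + g) else 0)
  + (if (2 <= b)%N && isPair t a b.-1
     then (b.-1)%:R * g / (b%:R * (a%:R * lL + g)) else 0).

Definition pPhi (s t : St h) : R :=
  if s is None then (if isPair t h.-1 1 then lG / g else 0) else
  let a := stateA s in let b := stateB s in
  (if (1 < a)%N && isPair t a.-1 b.+1
     then a%:R * lL / (b%:R * (a%:R * lL + g)) else 0)
  + (if (a == 1)%N && (t == None) then lL / (b%:R * (lL + g)) else 0)
  + (if isPair t h.-1 1 then lG / (b%:R * (a%:R * lL + g)) else 0).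

Definition Pmat : 'M[R]_#|St h| :=
  \matrix_(i, j) pP (enum_val i) (enum_val j).
Definition Phimat : 'M[R]_#|St h| :=
  \matrix_(i, j) pPhi (enum_val i) (enum_val j).
Definition Mmat : 'M[R]_#|St h| := invmx (1%:M - Pmat) *m Phimat.
Definition Gmat : 'M[R]_#|St h| :=
  \matrix_(i, j) (if isPair (enum_val j) h.-1 1 then lG / g else 0).
Definition Umat : 'M[R]_#|St h| := Mmat - Gmat.

(* Single-household Markovian SIR epidemic, described through its embedded
   jump chain.  State: a = number of susceptibles, inf = counts of current
   infectives by generation (inf`_j = number of generation-j infectives).
   From a state with B = sumn inf > 0 infectives the total event rate is
   B (a lL + g): a generation-j infective infects some susceptible at rate
   inf_j * a * lL (new infective of generation j+1) and recovers at rate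
   inf_j * g.  ev fuel i a inf = expected number of future infections of
   generation i. *)
Fixpoint ev (fuel i a : nat) (inf : seq nat) : R :=
  match fuel with
  | 0%N => 0
  | f.+1 =>
    let B := sumn inf in
    if B == 0%N then 0 else
    let T := B%:R * (a%:R * lL + g) in
    \sum_(j < size inf)
      ( (nth 0%N inf j * a)%:R * lL / T
          * ((j.+1 == i)%:R + ev f i a.-1 (incr_nth inf j.+1))
      + (nth 0%N inf j)%:R * g / T
          * ev f i a (set_nth 0%N inf j (nth 0%N inf j).-1) )
  end.

(* mean number of infectives of generation i, initial state: h-1 susceptibles
   and one infective of generation 0. The measure 2a + #infectives strictly
   decreases at each jump, so fuel 2h suffices. *)
Definition mu (i : nat) : R := (i == 0%N)%:R + ev (2 * h) i h.-1 [:: 1%N].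

End Matrices.

(* Main.v *)
Require Import Defs.
From HB Require Import structures.
From mathcomp Require Import all_boot all_order all_algebra.
From mathcomp Require Import zify ring lra.
Set Implicit Arguments. Unset Strict Implicit. Unset Printing Implicit Defensive.
Import Order.TTheory GRing.Theory Num.Theory.
Local Open Scope ring_scope.

Lemma sumn_incr_nth (s : seq nat) j : sumn (incr_nth s j) = (sumn s).+1.
Proof.
elim: s j => [|x s IH] j.
  have -> : incr_nth [::] j = ncons j 0 [:: 1] by case: j.
  by elim: j => // j; rewrite /= add0n.
by case: j => [|j] /=; [rewrite addSn | rewrite IH addnS].
Qed.

Lemma nth_le_sumn (s : seq nat) l : (nth 0%N s l <= sumn s)%N.
Proof. elim: s l => [|x s IH] [|l] //=; [exact: leq_addr | exact: leq_trans (IH l) (leq_addl _ _)]. Qed.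

Lemma sum_nth_R (R : realFieldType) (s : seq nat) :
  \sum_(j < size s) (nth 0%N s j)%:R = (sumn s)%:R :> R.
Proof.
elim: s => [|x s IH]; first by rewrite big_ord0.
by rewrite big_ord_recl /= IH natrD.
Qed.

Lemma sum_ind (R : realFieldType) (c i : nat) (F : nat -> R) :
  \sum_(l < i) (c == l :> nat)%:R * F l = if (c < i)%N then F c else 0.
Proof.
case: ifP => ci.
  rewrite (bigD1 (Ordinal ci)) //= eqxx mul1r big1 ?addr0 // => l /= lc.
  by rewrite eq_sym -(inj_eq val_inj) /= in lc; rewrite (negbTE lc) mul0r.
rewrite big1 // => l _; case: eqP => [E|]; last by rewrite mul0r.
by move: (ltn_ord l); rewrite -E ci.
Qed.

Lemma sum_trunc (R : realFieldType) (s : seq nat) i (phi : nat -> R) :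
  (forall j, (i <= j)%N -> phi j = 0) ->
  \sum_(j < size s) (nth 0%N s j)%:R * phi j = \sum_(l < i) (nth 0%N s l)%:R * phi l.
Proof.
move=> H.
pose F := fun j : nat => (nth 0%N s j)%:R * phi j.
rewrite (big_ord_widen (size s + i) F) ?leq_addr // big_mkcond /=.
rewrite [RHS](big_ord_widen (size s + i) F) ?leq_addl // [RHS]big_mkcond /=.
apply: eq_bigr => j _; rewrite /F; case: ifP => A; case: ifP => B //.
- by rewrite H ?mulr0 // leqNgt B.
- by rewrite nth_default ?mul0r // leqNgt A.
Qed.

Section Main.
Variables (R : realFieldType) (h : nat) (lG lL g : R).
Hypotheses (h2 : (2 <= h)%N) (lGp : 0 < lG) (lLp : 0 < lL) (gp : 0 < g).

Definition st (a b : nat) : St h := insub (inord a : 'I_h.+1, inord b : 'I_h.+1).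

Lemma st_Some a b : (0 < a)%N -> (0 < b)%N -> (a + b <= h)%N ->
  {p | st a b = Some p /\ stateA (Some p) = a /\ stateB (Some p) = b}.
Proof.
move=> a0 b0 ab.
have ha : (a <= h)%N by lia.
have hb : (b <= h)%N by lia.
pose pr := fun p : 'I_h.+1 * 'I_h.+1 => [&& (0 < p.1)%N, (0 < p.2)%N & (p.1 + p.2 <= h)%N].
have P : pr (inord a, inord b).
  by rewrite /pr /= !inordK //; apply/and3P.
exists (exist pr _ P); rewrite /st (insubT _ P) /=; split=> //.
by rewrite /stateA /stateB /= !inordK.
Qed.

Lemma st_None0 b : st 0 b = None.
Proof. by rewrite /st insubF //= inordK. Qed.

Lemma st_Nonea0 a : st a 0 = None.
Proof. by rewrite /st insubF //= (inordK (ltn0Sn h)) andbF. Qed.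

Lemma isPair_st t a b : (0 < a)%N -> (0 < b)%N -> (a + b <= h)%N ->
  isPair t a b = (t == st a b).
Proof.
move=> a0 b0 ab; have [p [-> [Ha Hb]]] := st_Some a0 b0 ab.
case: t => [q|] //=.
rewrite /isPair /= -Ha -Hb /stateA /stateB /=.
case: q => [[x y] Pq]; case: p Ha Hb => [[x' y'] Pp] /= Ha Hb.
apply/idP/idP.
  move=> /andP [/eqP E1 /eqP E2]; apply/eqP; congr Some; apply: val_inj => /=.
  by move/val_inj: E1 => ->; move/val_inj: E2 => ->.
by move=> /eqP [-> ->]; rewrite !eqxx.
Qed.

Lemma stateP (s : St h) : s != None ->
  [/\ (0 < stateA s)%N, (0 < stateB s)%N, (stateA s + stateB s <= h)%N
   & s = st (stateA s) (stateB s)].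
Proof.
case: s => [p|] // _.
have := valP p => /and3P [H1 H2 H3].
rewrite /stateA /stateB; split=> //.
have [q [E [Ha Hb]]] := st_Some H1 H2 H3.
rewrite E; congr Some; apply: val_inj => /=.
move: Ha Hb; case: p {H1 H2 H3 E} => [[x y] Pp]; case: q => [[x' y'] Pq] /= Ha Hb.
by move/val_inj: Ha => ->; move/val_inj: Hb => ->.
Qed.


Local Notation n := #|St h|.
Local Notation idx := (@enum_rank (St h)).

Lemma sum_idx (F : 'I_n -> R) : \sum_(j : 'I_n) F j = \sum_(t : St h) F (idx t).
Proof. by rewrite (reindex idx) //; exact: onW_bij (enum_rank_bij _). Qed.

Lemma sum_pick (u : St h) c (F : St h -> R) :
  \sum_t (if t == u then c else 0) * F t = c * F u.
Proof.
rewrite (bigD1 u) //= eqxx big1 ?addr0 // => t /negbTE ->; by rewrite mul0r.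
Qed.

Lemma Pmat_mul m (y : 'M[R]_(n, m)) s j :
  (Pmat h lL g *m y) (idx s) j = \sum_t pP lL g s t * y (idx t) j.
Proof. by rewrite mxE sum_idx; apply: eq_bigr => t _; rewrite mxE !enum_rankK. Qed.

Lemma Phimat_mul m (y : 'M[R]_(n, m)) s j :
  (Phimat h lG lL g *m y) (idx s) j = \sum_t pPhi lG lL g s t * y (idx t) j.
Proof. by rewrite mxE sum_idx; apply: eq_bigr => t _; rewrite mxE !enum_rankK. Qed.

Lemma Amat_mul m (y : 'M[R]_(n, m)) s j :
  ((1%:M - Pmat h lL g) *m y) (idx s) j = y (idx s) j - \sum_t pP lL g s t * y (idx t) j.
Proof. by rewrite mulmxBl mul1mx -Pmat_mul [LHS]mxE [X in _ + X]mxE. Qed.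

Definition s0 := st h.-1 1.

Lemma s0P : {p | s0 = Some p /\ stateA (Some p) = h.-1 /\ stateB (Some p) = 1%N}.
Proof. apply: st_Some; lia. Qed.

Lemma Gmat_mul m (y : 'M[R]_(n, m)) s j :
  (Gmat h lG g *m y) (idx s) j = lG / g * y (idx s0) j.
Proof.
rewrite mxE sum_idx -(sum_pick s0 (lG/g) (fun t => y (idx t) j)).
apply: eq_bigr => t _; rewrite mxE enum_rankK isPair_st //; lia.
Qed.

Lemma rowP_Some (s : St h) (F : St h -> R) : s != None ->
  let a := stateA s in let b := stateB s in
  \sum_t pP lL g s t * F t =
    (if (1 < a)%N then a%:R * lL / (a%:R * lL + g) * F (st a.-1 b.+1) else 0)
  + (if a == 1%N then lL / (lL + g) * F None else 0)
  + (if (2 <= b)%N then (b.-1)%:R * g / (b%:R * (a%:R * lL + g)) * F (st a b.-1) else 0).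
Proof.
move=> sN a b; have [Ha Hb Hab Es] := stateP sN.
case: s sN Es @a @b Ha Hb Hab => [p|] // _ Es a b Ha Hb Hab.
rewrite /pP -/a -/b.
under eq_bigr do rewrite !mulrDl.
rewrite !big_split /=.
congr (_ + _ + _).
- case: ifP => H1.
    rewrite -(sum_pick (st a.-1 b.+1)); apply: eq_bigr => t _.
    rewrite isPair_st //; lia.
  by rewrite big1 // => t _; rewrite mul0r.
- case: ifP => H1.
    by rewrite -(sum_pick None).
  by rewrite big1 // => t _; rewrite mul0r.
- case: ifP => H1.
    rewrite -(sum_pick (st a b.-1)); apply: eq_bigr => t _.
    rewrite isPair_st //; lia.
  by rewrite big1 // => t _; rewrite mul0r.
Qed.


Lemma rowPhi_Some (s : St h) (F : St h -> R) : s != None ->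
  let a := stateA s in let b := stateB s in
  \sum_t pPhi lG lL g s t * F t =
    (if (1 < a)%N then a%:R * lL / (b%:R * (a%:R * lL + g)) * F (st a.-1 b.+1) else 0)
  + (if a == 1%N then lL / (b%:R * (lL + g)) * F None else 0)
  + lG / (b%:R * (a%:R * lL + g)) * F s0.
Proof.
move=> sN a b; have [Ha Hb Hab Es] := stateP sN.
case: s sN Es @a @b Ha Hb Hab => [p|] // _ Es a b Ha Hb Hab.
rewrite /pPhi -/a -/b.
under eq_bigr do rewrite !mulrDl.
rewrite !big_split /=.
congr (_ + _ + _).
- case: ifP => H1.
    rewrite -(sum_pick (st a.-1 b.+1)); apply: eq_bigr => t _.
    rewrite isPair_st //; lia.
  by rewrite big1 // => t _; rewrite mul0r.
- case: ifP => H1.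
    by rewrite -(sum_pick None).
  by rewrite big1 // => t _; rewrite mul0r.
- rewrite -(sum_pick s0); apply: eq_bigr => t _.
  rewrite isPair_st //; lia.
Qed.

Lemma rowP_None (F : St h -> R) : \sum_t pP lL g None t * F t = 0.
Proof. by rewrite big1 // => t _; rewrite mul0r. Qed.

Lemma rowPhi_None (F : St h -> R) : \sum_t pPhi lG lL g None t * F t = lG / g * F s0.
Proof.
rewrite -(sum_pick s0); apply: eq_bigr => t _; rewrite /pPhi isPair_st //; lia.
Qed.

Definition meas (s : St h) := (2 * stateA s + stateB s)%N.

Lemma meas_st a b : (0 < a)%N -> (0 < b)%N -> (a + b <= h)%N -> meas (st a b) = (2 * a + b)%N.
Proof. by move=> a0 b0 ab; have [p [-> [Ha Hb]]] := st_Some a0 b0 ab; rewrite /meas Ha Hb. Qed.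

Lemma A_inj m (v : 'M[R]_(n, m)) : (1%:M - Pmat h lL g) *m v = 0 -> v = 0.
Proof.
move=> Av; apply/matrixP => i j; rewrite [RHS]mxE.
suff K : forall N s, (meas s <= N)%N -> v (idx s) j = 0.
  by rewrite -(enum_valK i); apply: (K (meas (enum_val i))).
have E s : v (idx s) j = \sum_t pP lL g s t * v (idx t) j.
  by apply/eqP; rewrite -subr_eq0 -Amat_mul Av mxE.
elim=> [|N IH] s.
  case: s => [[[x y] Pp]|] //=; rewrite /meas /stateB /= => M; exfalso; move: M; have := Pp; case/and3P => /=; lia.
move=> Ms; rewrite E.
case: (eqVneq s None) => [->|sN]; first by rewrite rowP_None.
rewrite rowP_Some //.
have [Ha Hb Hab _] := stateP sN.
move: Ms; rewrite /meas => Ms.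
set a := stateA s in Ha Hab Ms *; set b := stateB s in Hb Hab Ms *.
have -> : v (idx None) j = 0 by apply: IH; rewrite /meas /=; lia.
rewrite mulr0 if_same addr0.
case: ifP => H1; last case: ifP => H2.
- rewrite IH ?meas_st ?mulr0 ?add0r; try lia.
  by case: ifP => // H2; rewrite IH ?meas_st ?mulr0 //; lia.
- rewrite IH ?meas_st ?mulr0 ?addr0 //; lia.
- by rewrite add0r.
Qed.

Lemma A_unit : (1%:M - Pmat h lL g) \in unitmx.
Proof.
rewrite -unitmx_tr -row_free_unit -kermx_eq0; apply/eqP.
apply: trmx_inj; rewrite trmx0; apply: A_inj.
by rewrite -[X in X *m _]trmxK -trmx_mul mulmx_ker trmx0.
Qed.


Definition xv k : 'cV[R]_n := Umat h lG lL g ^+ k *m const_mx 1.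
Definition V k (s : St h) : R := \sum_t (Umat h lG lL g ^+ k) (idx s) (idx t).

Lemma V_xv k s : V k s = xv k (idx s) 0.
Proof. by rewrite /xv mxE sum_idx; apply: eq_bigr => t _; rewrite mxE mulr1. Qed.

Lemma V0 s : V 0 s = 1.
Proof. by rewrite V_xv /xv expr0 mul1mx mxE. Qed.

Lemma xv_rec k : (1%:M - Pmat h lL g) *m xv k.+1 =
  Phimat h lG lL g *m xv k - (1%:M - Pmat h lL g) *m (Gmat h lG g *m xv k).
Proof.
rewrite /xv exprS -mulmxE -mulmxA.
set y := _ *m const_mx 1.
have -> : Umat h lG lL g *m y = invmx (1%:M - Pmat h lL g) *m (Phimat h lG lL g *m y)
   - Gmat h lG g *m y by rewrite /Umat /Mmat mulmxBl !mulmxA.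
by rewrite mulmxBr (mulmxA (1%:M - Pmat h lL g) (invmx _)) (mulmxV A_unit) mul1mx.
Qed.


Lemma xv_entry k s : xv k.+1 (idx s) 0 - \sum_t pP lL g s t * xv k.+1 (idx t) 0 =
  \sum_t pPhi lG lL g s t * xv k (idx t) 0
  - (lG / g * xv k (idx s0) 0 - \sum_t pP lL g s t * (lG / g * xv k (idx s0) 0)).
Proof.
have E := congr1 (fun M : 'cV[R]_n => M (idx s) 0) (xv_rec k).
have mB (M N : 'cV[R]_n) : (M - N) (idx s) 0 = M (idx s) 0 - N (idx s) 0 by rewrite !mxE.
rewrite /= mB !Amat_mul Phimat_mul Gmat_mul in E.
rewrite E; congr (_ - (_ - _)); apply: eq_bigr => t _; by rewrite Gmat_mul.
Qed.

Lemma V_None k : V k.+1 None = 0.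
Proof.
have := xv_entry k None.
rewrite rowP_None rowPhi_None rowP_None !subr0 subrr -V_xv; done.
Qed.


Lemma V_rec k a b : (0 < a)%N -> (0 < b)%N -> (a + b <= h)%N ->
  b%:R * (a%:R * lL + g) * V k.+1 (st a b) =
  a%:R * lL * V k (st a.-1 b.+1) + b%:R * a%:R * lL * V k.+1 (st a.-1 b.+1)
  + (b.-1)%:R * g * V k.+1 (st a b.-1).
Proof.
move=> a0 b0 ab; have [p [Es [Ha Hb]]] := st_Some a0 b0 ab.
have := xv_entry k (Some p).
rewrite (rowP_Some (fun t => xv k.+1 (idx t) 0)) //.
rewrite (rowPhi_Some (fun t => xv k (idx t) 0)) //.
rewrite (rowP_Some (fun t => lG / g * xv k (idx s0) 0)) //.
move=> E; rewrite Ha Hb in E; rewrite !V_xv Es.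
have gn : g != 0 by rewrite gt_eqF.
have bn : b%:R != 0 :> R by rewrite pnatr_eq0 -lt0n.
have an : a%:R * lL + g != 0.
  by rewrite gt_eqF // ltr_wpDl // mulr_ge0 // ?ler0n // ltW.
have an1 : lL + g != 0 by rewrite gt_eqF // addr_gt0.
have bm : (b.-1)%:R = b%:R - 1 :> R by rewrite -subn1 natrB.
have [a1|a1] := eqVneq a 1%N; have [b1|b1] := eqVneq b 1%N.
- rewrite a1 b1 /= in E *; rewrite st_None0.
  move/eqP: E; rewrite subr_eq => /eqP ->.
  by field; rewrite an1 gn.
- rewrite a1 /= (_ : (1 < b)%N = true) /= in E *; last lia; rewrite st_None0.
  move/eqP: E; rewrite subr_eq => /eqP ->.
  by rewrite bm; field; rewrite an1 bn gn.
- rewrite b1 /= (negbTE a1) (_ : (1 < a)%N = true) /= in E *; last lia.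
  move/eqP: E; rewrite subr_eq => /eqP ->.
  by field; rewrite an gn.
- rewrite (negbTE a1) (_ : (1 < a)%N = true) /= in E *; last lia.
  rewrite (_ : (1 < b)%N = true) /= in E; last lia.
  move/eqP: E; rewrite subr_eq => /eqP ->.
  by rewrite bm; field; rewrite an bn gn.
Qed.



Lemma W_rec k a b : (0 < b)%N -> (a + b <= h)%N ->
  b%:R * (a%:R * lL + g) * V k.+1 (st a b) =
  a%:R * lL * V k (st a.-1 b.+1) + b%:R * a%:R * lL * V k.+1 (st a.-1 b.+1)
  + (b.-1)%:R * g * V k.+1 (st a b.-1).
Proof.
move=> b0 ab; case: a ab => [|a] ab; last by apply: V_rec.
by rewrite !st_None0 V_None; ring.
Qed.


Definition Ei i a (s : seq nat) : R :=
  \sum_(l < i) (nth 0%N s l)%:R * V (i - l) (st a (sumn s)).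

Lemma Ei0 i a s : sumn s = 0%N -> Ei i a s = 0.
Proof.
move=> B0; rewrite /Ei big1 // => l _.
have := nth_le_sumn s l; rewrite B0 leqn0 => /eqP ->; by rewrite mul0r.
Qed.

Lemma ev_E f i a s : (0 < i)%N -> (2 * a + sumn s <= f)%N -> (a + sumn s <= h)%N ->
  ev lL g f i a s = Ei i a s.
Proof.
move=> i0; elim: f a s => [|f IH] a s Hf Hh.
  by rewrite Ei0 //; lia.
rewrite /=; case: eqP => B0; first by rewrite Ei0.
set B := sumn s in B0 Hf Hh *.
have Bp : (0 < B)%N by rewrite lt0n; apply/eqP.
set T := B%:R * (a%:R * lL + g).
have Tn : T != 0.
  by rewrite /T mulf_neq0 // ?pnatr_eq0 -?lt0n // gt_eqF // ltr_wpDl // ?mulr_ge0 // ?ler0n // ltW.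
pose E1 := \sum_(l < i) (nth 0%N s l)%:R * V (i - l) (st a.-1 B.+1).
pose E2 := \sum_(l < i) (nth 0%N s l)%:R * V (i - l) (st a B.-1).
pose phi j := if (j < i)%N then V (i - j.+1) (st a.-1 B.+1) else 0.
pose chi j := if (j < i)%N then V (i - j) (st a B.-1) else 0.
have step : forall j : 'I_(size s),
  (nth 0%N s j * a)%:R * lL / T * ((j.+1 == i)%:R + ev lL g f i a.-1 (incr_nth s j.+1))
  + (nth 0%N s j)%:R * g / T * ev lL g f i a (set_nth 0%N s j (nth 0%N s j).-1)
  = T^-1 * (a%:R * lL * ((nth 0%N s j)%:R * phi j + (nth 0%N s j)%:R * E1)
            + g * ((nth 0%N s j)%:R * E2 - (nth 0%N s j)%:R * chi j)).
  move=> j.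
  have P1 : (nth 0%N s j * a)%:R * lL / T * ((j.+1 == i)%:R + ev lL g f i a.-1 (incr_nth s j.+1))
      = T^-1 * (a%:R * lL * ((nth 0%N s j)%:R * phi j + (nth 0%N s j)%:R * E1)).
    have [a0|ap] := posnP a.
      by rewrite a0 muln0 !mul0r mulr0.
    rewrite IH; last 2 first.
    - rewrite sumn_incr_nth; lia.
    - rewrite sumn_incr_nth; lia.
    rewrite /Ei sumn_incr_nth.
    under eq_bigr do rewrite nth_incr_nth natrD mulrDl.
    rewrite big_split /= -/B (@sum_ind R j.+1 i (fun l => V (i - l) (st a.-1 B.+1))) addrA.
    have -> : (j.+1 == i)%:R + (if (j.+1 < i)%N then V (i - j.+1) (st a.-1 B.+1) else 0) = phi j.
      rewrite /phi; case: (ltngtP j.+1 i) => H /=.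
      - by rewrite mulr0n add0r.
      - by rewrite mulr0n add0r.
      - by rewrite -H subnn V0 addr0.
    rewrite natrM -/E1; field; exact: Tn.
  have P2 : (nth 0%N s j)%:R * g / T * ev lL g f i a (set_nth 0%N s j (nth 0%N s j).-1)
      = T^-1 * (g * ((nth 0%N s j)%:R * E2 - (nth 0%N s j)%:R * chi j)).
    have [sj0|sjp] := posnP (nth 0%N s j).
      by rewrite sj0 !mul0r subrr mulr0 mulr0.
    have sumE : sumn (set_nth 0%N s j (nth 0%N s j).-1) = B.-1.
      by rewrite sumn_set_nth0 -/B; lia.
    rewrite IH; last 2 first.
    - rewrite sumE; lia.
    - rewrite sumE; lia.
    rewrite /Ei sumE.
    have nE : forall l : nat, (nth 0%N (set_nth 0%N s j (nth 0%N s j).-1) l)%:R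
        = (nth 0%N s l)%:R - (j == l :> nat)%:R :> R.
      move=> l; rewrite nth_set_nth /=; have [->|ne] := eqVneq l j.
        by rewrite -subn1 natrB.
      by rewrite /= mulr0n subr0.
    under eq_bigr do rewrite nE mulrBl.
    rewrite sumrB -/E2 (@sum_ind R j i (fun l => V (i - l) (st a B.-1))) -/(chi j).
    by field.
  by rewrite P1 P2 -mulrDr.
rewrite (eq_bigr _ (fun j _ => step j)) -mulr_sumr.
rewrite big_split /= -!mulr_sumr big_split /= sumrB.
rewrite -!mulr_suml !sum_nth_R -/B.
rewrite (@sum_trunc R s i phi); last by move=> j ij; rewrite /phi ltnNge ij.
rewrite (@sum_trunc R s i chi); last by move=> j ij; rewrite /chi ltnNge ij.
have -> : \sum_(l < i) (nth 0%N s l)%:R * chi l = E2.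
  by apply: eq_bigr => l _; rewrite /chi ltn_ord.
have WE : forall l : 'I_i, V (i - l) (st a B) = T^-1 * (a%:R * lL * phi l
    + B%:R * a%:R * lL * V (i - l) (st a.-1 B.+1) + (B.-1)%:R * g * V (i - l) (st a B.-1)).
  move=> l; have li := ltn_ord l; rewrite /phi li -(subnSK li) -W_rec ?mulKf //.

rewrite /Ei -/B [RHS](eq_bigr (fun l : 'I_i => T^-1 * (a%:R * lL * ((nth 0%N s l)%:R * phi l)
   + B%:R * a%:R * lL * ((nth 0%N s l)%:R * V (i - l) (st a.-1 B.+1))
   + (B.-1)%:R * g * ((nth 0%N s l)%:R * V (i - l) (st a B.-1))))); last first.
  by move=> l _; rewrite WE; ring.
rewrite -mulr_sumr !big_split /= -!mulr_sumr -/E1 -/E2.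
have bm : (B.-1)%:R = B%:R - 1 :> R by rewrite -subn1 natrB.
by rewrite bm; field.
Qed.

Lemma ev_i0 f a s : ev lL g f 0 a s = 0.
Proof.
elim: f a s => [|f IH] a s //=; case: eqP => // _.
by rewrite big1 // => j _; rewrite !IH /= mulr0n !addr0 !mulr0 addr0.
Qed.

Lemma main_eq (t0 : St h) : stateA t0 = h.-1 -> stateB t0 = 1%N ->
  forall i : nat, (i < h)%N -> mu h lL g i = V i t0.
Proof.
move=> Ha Hb i ih.
have tN : t0 != None by apply/eqP => E; move: Ha; rewrite E /=; lia.
have [_ _ _ Et] := stateP tN; rewrite Et Ha Hb.
rewrite /mu; case: i ih => [|i] ih.
  by rewrite ev_i0 V0 addr0.
rewrite /= mulr0n add0r ev_E //; last 2 first.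
- rewrite /=; lia.
- rewrite /=; lia.
rewrite /Ei big_ord_recl /= big1 ?addr0 ?mul1r ?subn0 //.
by move=> l _; rewrite nth_nil mul0r.
Qed.

End Main.

Unset Implicit Arguments.

Theorem lemma3p2 (R : realFieldType) (h : nat) (lG lL g : R) :
  (2 <= h)%N -> 0 < lG -> 0 < lL -> 0 < g ->
  forall s0 : St h, stateA s0 = h.-1 -> stateB s0 = 1%N ->
  forall i : nat, (i < h)%N ->
    mu h lL g i =
    \sum_(t : St h) (Umat h lG lL g ^+ i) (enum_rank s0) (enum_rank t).
Proof.
move=> h2 lGp lLp gp s0 Ha Hb i ih.
exact: (main_eq h2 lGp lLp gp Ha Hb ih).
Qed.
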